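(* Let $\{\eta_n\}_{n\ge1}$ be real random variables, $\eta_n$ defined on a probability space $\Omega_n$, and let $\{\phi_{n,x}\}_{n\ge1,x\in\mathbb R}$ be real random variables with $\phi_{n,x}$ defined on $\Omega_n$. Assume: (1) $0\le\phi_{n,x}\le\phi_{n,y}\le1$ for all $n\ge1$ and $x\le y$; (2) for every $\varepsilon>0$ there is $M>0$ such that for all $n$, $x\in\mathbb R$ and $\omega\in\Omega_n$ with $\eta_n(\omega)-x>M$ we have $\phi_{n,x}(\omega)<\varepsilon$; (3) for every $\varepsilon>0$ there is $M>0$ such that for all $n$, $x\in\mathbb R$ and $\omega\in\Omega_n$ with $\eta_n(\omega)-x<-M$ we have $\phi_{n,x}(\omega)>1-\varepsilon$; (4) there is a constant $c>0$ independent of $n$ such that for all $n$, $x\in\mathbb R$ and $\omega\in\Omega_n$ with $x<\eta_n(\omega)\le x+1$ we have $\phi_{n,x+1}(\omega)-\phi_{n,x}(\omega)\ge c$. Then the sequence of random variables $\{\eta_n\}_{n\ge1}$ and the sequence of non-decreasing functions $\{F_n(x):=\mathbb E\,\phi_{n,x}\}_{n\ge1}$ are asymptotically equivalent.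
   Context: A sequence $\{\eta_n\}_{n\ge1}$ of real random variables spreads if $\lim_{n\to\infty}\sup_{x\in\mathbb R}\mathrm{Prob}\{x<\eta_n\le x+1\}=0$. A sequence $\{F_n\}_{n\ge1}$ of non-decreasing functions $\mathbb R\to\mathbb R$ spreads if $\lim_{n\to\infty}\sup_{x\in\mathbb R}(F_n(x+1)-F_n(x))=0$. A sequence of real random variables $\{\eta_n\}$ and a sequence of non-decreasing functions $\{F_n\}$ are asymptotically equivalent if (i) $\{\eta_n\}$ spreads if and only if $\{F_n\}$ spreads, and (ii) when both spread, $\lim_{n\to\infty}\sup_{x\in\mathbb R}(\mathrm{Prob}\{\eta_n\le x\}-F_n(x))=0$. Two sequences of real random variables $\{\eta_n\},\{\zeta_n\}$ are asymptotically equivalent if $\{\eta_n\}$ spreads iff $\{\zeta_n\}$ spreads, and when both spread $\lim_{n\to\infty}\sup_x(\mathrm{Prob}\{\eta_n\le x\}-\mathrm{Prob}\{\zeta_n\le x\})=0$. The same notions apply to families indexed by other index sets with a limit point in place of $n\to\infty$. *)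

(* Defs.v *)
From HB Require Import structures.
From mathcomp Require Import all_boot all_order all_algebra.
From mathcomp Require Import all_classical all_reals all_analysis.
Set Implicit Arguments. Unset Strict Implicit. Unset Printing Implicit Defensive.
Import Order.TTheory GRing.Theory Num.Theory.
Import numFieldNormedType.Exports.
Local Open Scope classical_set_scope.
Local Open Scope ring_scope.

Definition spreads_rv (R : realType) (d : nat -> measure_display)
  (T : forall n, measurableType (d n)) (P : forall n, probability (T n) R)
  (eta : forall n, T n -> R) : Prop :=
  (fun n => ereal_sup (range (fun x : R =>
      P n [set w | x < eta n w <= x + 1])))
    @ \oo --> (0 : \bar R).

Definition spreads_fun (R : realType) (F : nat -> R -> R) : Prop :=
  (fun n => ereal_sup (range (fun x : R => ((F n (x + 1) - F n x)%:E))))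
    @ \oo --> (0 : \bar R).

Definition asymp_equiv_rv_fun (R : realType) (d : nat -> measure_display)
  (T : forall n, measurableType (d n)) (P : forall n, probability (T n) R)
  (eta : forall n, T n -> R) (F : nat -> R -> R) : Prop :=
  (spreads_rv P eta <-> spreads_fun F) /\
  (spreads_rv P eta -> spreads_fun F ->
    (fun n => ereal_sup (range (fun x : R =>
        (P n [set w | (eta n w <= x)%R] - (F n x)%:E)%E)))
      @ \oo --> (0 : \bar R)).

(* Main.v *)
Require Import Defs.
From HB Require Import structures.
From mathcomp Require Import all_boot all_order all_algebra.
From mathcomp Require Import all_classical all_reals all_analysis.
From mathcomp Require Import lra.
Import Order.TTheory GRing.Theory Num.Theory.
Import numFieldNormedType.Exports.
Local Open Scope classical_set_scope.
Local Open Scope ring_scope.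

Section Gen.
Context d (T : measurableType d) (R : realType) (P : probability T R).
Local Open Scope ereal_scope.

Lemma Emono (f g : T -> R) : measurable_fun setT f -> measurable_fun setT g ->
  (forall w, (0 <= f w)%R) -> (forall w, (f w <= g w)%R) -> 'E_P[f] <= 'E_P[g].
Proof.
move=> mf mg f0 fg; apply: expectation_le => //.
  by move=> w; exact: le_trans (f0 w) (fg w).
exact: aeW.
Qed.

Lemma Eadd (f g : T -> R) : measurable_fun setT f -> measurable_fun setT g ->
  (forall w, (0 <= f w)%R) -> (forall w, (0 <= g w)%R) ->
  'E_P[f \+ g] = ('E_P[f] + 'E_P[g])%E.
Proof.
move=> mf mg f0 g0; rewrite unlock.
under eq_integral do rewrite /= EFinD.
apply: ge0_integralD => //.
- by move=> w _; rewrite lee_fin.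
- exact/measurable_realfun.measurable_EFinP.
- by move=> w _; rewrite lee_fin.
- exact/measurable_realfun.measurable_EFinP.
Qed.

Lemma EZindic (A : set T) (c : R) : measurable A -> (0 <= c)%R ->
  'E_P[fun w => (c * \1_A w)%R] = c%:E * P A.
Proof.
move=> mA c0; rewrite unlock.
have := @integralZl_indic _ _ _ P setT measurableT (fun _ => A) c.
move=> ->//; last by move=> /lt_le_trans/(_ c0); rewrite ltxx.
by rewrite integral_indic// setIT.
Qed.

End Gen.
Arguments Emono {d T R P f g}.
Arguments Eadd {d T R P f g}.
Arguments EZindic {d T R P A c}.

Lemma cvg_dom (R : realType) (u : nat -> \bar R) (v : nat -> R) :
  v @ \oo --> 0 ->
  (forall e : R, 0 < e -> exists K : R, 0 <= K /\ forall n,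
     ((- e)%:E <= u n /\ u n <= (e + K * v n)%:E)%E) ->
  u @ \oo --> 0%E.
Proof.
move=> v0 H.
have fu : forall n, u n \is a fin_num.
  move=> n; have [K [_ /(_ n) [h1 h2]]] := H 1 ltr01.
  by rewrite fin_numElt (lt_le_trans _ h1) ?ltNyr // (le_lt_trans h2) ?ltry.
apply: cvg_EFin; first by apply: nearW.
apply/cvgrPdist_le => e e0.
have e20 : 0 < e / 2 by rewrite divr_gt0.
have [K [K0 HK]] := H _ e20.
have dpos : 0 < e / 2 / (K + 1) by rewrite divr_gt0// ltr_wpDl.
move/cvgrPdist_le : v0 => /(_ _ dpos).
apply: filterS => n hn.
have [h1 h2] := HK n.
rewrite -(fineK (fu n)) in h1 h2.
rewrite lee_fin in h1; rewrite lee_fin in h2.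
rewrite /= sub0r normrN.
move: hn; rewrite sub0r normrN => hn.
have hv : K * v n <= e / 2.
  have : K * v n <= K * (e / 2 / (K + 1)).
    by apply: ler_wpM2l => //; exact: le_trans (ler_norm _) hn.
  move/le_trans; apply.
  rewrite mulrA ler_pdivrMr ?ltr_wpDl// mulrC ler_wpM2l ?ltW //; idtac.
  by rewrite ltrDl ltr01.
rewrite ler_norml; apply/andP; split.
  by apply: le_trans h1; lra.
apply: (le_trans h2).
lra.
Qed.

Section Main.
Variables (R : realType) (d : nat -> measure_display)
  (T : forall n, measurableType (d n)) (P : forall n, probability (T n) R)
  (eta : forall n, {RV (P n) >-> R})
  (phi : forall n, R -> {RV (P n) >-> R}).
Hypothesis H1 : forall n (x y : R) (w : T n), x <= y ->
     0 <= phi n x w /\ phi n x w <= phi n y w /\ phi n y w <= 1.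
Hypothesis H2 : forall eps : R, 0 < eps -> exists M : R, 0 < M /\
     forall n (x : R) (w : T n), eta n w - x > M -> phi n x w < eps.
Hypothesis H3 : forall eps : R, 0 < eps -> exists M : R, 0 < M /\
     forall n (x : R) (w : T n), eta n w - x < - M -> phi n x w > 1 - eps.
Variables (c : R) (c0 : 0 < c).
Hypothesis H4 : forall n (x : R) (w : T n), x < eta n w <= x + 1 ->
       phi n (x + 1) w - phi n x w >= c.

Definition F n x := fine ('E_(P n)[phi n x])%E.

Lemma phi01 n x w : 0 <= phi n x w /\ phi n x w <= 1.
Proof. by have [h1 [h2 h3]] := H1 n x x w (le_refl x); split. Qed.

Lemma mphi n x : measurable_fun setT (phi n x).
Proof. exact: measurable_funPT. Qed.

Lemma ind01 (U : Type) (A : set U) (w : U) : 0 <= \1_A w :> R /\ \1_A w <= 1 :> R.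
Proof. by rewrite indicE; case: (w \in A). Qed.
Arguments ind01 {U}.

Lemma EF n x : ('E_(P n)[phi n x] = (F n x)%:E)%E /\ 0 <= F n x /\ F n x <= 1.
Proof.
have h0 : (0 <= 'E_(P n)[phi n x])%E.
  by apply: expectation_ge0 => w; case: (phi01 n x w).
have h1 : ('E_(P n)[phi n x] <= 1)%E.
  rewrite -(expectation_cst (P n) 1); apply: Emono => //.
  - by move=> w; case: (phi01 n x w).
  - by move=> w; case: (phi01 n x w).
have fin : ('E_(P n)[phi n x] \is a fin_num)%E.
  by rewrite ge0_fin_numE // (le_lt_trans h1) ?ltry.
have E : ('E_(P n)[phi n x] = (F n x)%:E)%E by rewrite /F fineK.
by move: h0 h1; rewrite E !lee_fin.
Qed.

Lemma Fmono n x y : x <= y -> F n x <= F n y.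
Proof.
move=> xy; have [E1 _] := EF n x; have [E2 _] := EF n y.
rewrite -lee_fin -E1 -E2; apply: Emono; try exact: mphi.
- by move=> w; case: (phi01 n x w).
- by move=> w; have [_ [h _]] := H1 n x y w xy.
Qed.

Definition Aw n a b := [set w : T n | a < eta n w <= b].
Definition Bl n a := [set w : T n | eta n w <= a].

Lemma mAw n a b : measurable (Aw n a b).
Proof.
have -> : Aw n a b = eta n @^-1` `]a, b].
  by apply/seteqP; split => w; rewrite /Aw /= in_itv.
exact: measurable_funPTI (measurable_itv _).
Qed.

Lemma mBl n a : measurable (Bl n a).
Proof.
have -> : Bl n a = eta n @^-1` `]-oo, a].
  by apply/seteqP; split => w; rewrite /Bl /= in_itv.
exact: measurable_funPTI (measurable_itv _).
Qed.

Definition S n := ereal_sup (range (fun x => P n (Aw n x (x + 1)))).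

Lemma PAS n (x : R) : (P n (Aw n x (x + 1)%R) <= S n)%E.
Proof. by apply: ereal_sup_ubound; exists x. Qed.

Lemma S01 n : (0 <= S n)%E /\ (S n <= 1)%E.
Proof.
split; first exact: le_trans (measure_ge0 _ _) (PAS n 0).
apply/ereal_supP => y [x _ <-]; exact: probability_le1 (mAw _ _ _).
Qed.

Lemma SE n : S n = (fine (S n))%:E.
Proof.
have [h0 h1] := S01 n.
by rewrite fineK // ge0_fin_numE // (le_lt_trans h1) ?ltry.
Qed.

Lemma cover n (a : R) k : (P n (Aw n a (a + k%:R)%R) <= (k%:R * fine (S n))%:E)%E.
Proof.
elim: k => [|k IH].
  rewrite mul0r (_ : Aw n a (a + 0%:R) = set0) ?measure0 //.
  apply/seteqP; split => w //= /andP [h1 h2].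
  by have := lt_le_trans h1 h2; rewrite addr0 ltxx.
apply: (@le_trans _ _ (P n (Aw n a (a + k%:R) `|` Aw n (a + k%:R) (a + k%:R + 1)))).
  apply: le_measure; rewrite ?inE; [exact: mAw | apply: measurableU; exact: mAw|].
  move=> w /= /andP [h1 h2].
  have [h|h] := leP (eta n w) (a + k%:R); [left|right]; apply/andP; split => //.
  by rewrite -addrA natr1.
apply: le_trans (measureU2 _ (mAw _ _ _) (mAw _ _ _)) _.
rewrite -natr1 mulrDl mul1r EFinD; apply: leeD => //.
by rewrite -SE; exact: PAS.
Qed.

Lemma bigN eps : 0 < eps -> exists N : nat,
  (forall n x w, x + N%:R < eta n w -> phi n (x + 1) w < eps) /\
  (forall n x w, eta n w <= x - N%:R -> 1 - eps < phi n x w).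
Proof.
move=> e0; have [M2 [M20 HM2]] := H2 eps e0; have [M3 [M30 HM3]] := H3 eps e0.
have hM : 0 <= M2 + M3 + 1 by lra.
have hN := archi_boundP hM.
exists (Num.bound (M2 + M3 + 1)); split => n x w h.
  by apply: HM2; lra.
by apply: HM3; lra.
Qed.


Definition D n := ereal_sup (range (fun x => (F n (x + 1) - F n x)%:E)).

Lemma D01 n : (0 <= D n)%E /\ (D n <= 1)%E.
Proof.
split.
  apply: le_trans (_ : ((F n (0 + 1) - F n 0)%:E <= D n)%E).
    by rewrite lee_fin subr_ge0 Fmono // lerDl.
  by apply: ereal_sup_ubound; exists 0.
apply/ereal_supP => y [x _ <-]; rewrite lee_fin.
have [_ [a b]] := EF n (x + 1); have [_ [a' b']] := EF n x; lra.
Qed.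

Lemma DE n : D n = (fine (D n))%:E.
Proof.
have [h0 h1] := D01 n.
by rewrite fineK // ge0_fin_numE // (le_lt_trans h1) ?ltry.
Qed.

Lemma D_up n eps (N : nat) : 0 < eps ->
  (forall n x w, x + N%:R < eta n w -> phi n (x + 1) w < eps) ->
  (forall n x w, eta n w <= x - N%:R -> 1 - eps < phi n x w) ->
  (D n <= (eps + (N + N)%:R * fine (S n))%:E)%E.
Proof.
move=> e0 HA HB; apply/ereal_supP => y [x _ <-].
set A := Aw n (x - N%:R) (x - N%:R + (N + N)%:R).
have pw : forall w, phi n (x + 1) w <= (phi n x \+ (cst eps \+ \1_A)) w.
  move=> w /=.
  have [p0 p1] := phi01 n x w; have [q0 q1] := phi01 n (x + 1) w.
  have [i0 i1] := ind01 A w.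
  have [h|h] := leP (eta n w) (x - N%:R).
    by have := HB n x w h; lra.
  have [h'|h'] := ltP (x + N%:R) (eta n w).
    by have := HA n x w h'; lra.
  have : \1_A w = 1 :> R.
    rewrite indicE mem_set //; rewrite /A /Aw /= h /=.
    by rewrite natrD addrA subrK.
  lra.
have mA : measurable A by exact: mAw.
have mg : measurable_fun setT (phi n x \+ (cst eps \+ \1_A)).
  by apply: measurable_realfun.measurable_funD; [exact: mphi|apply: measurable_realfun.measurable_funD; [exact: measurable_cst | exact: measurable_realfun.measurable_indic]].
have f0 : forall w, 0 <= phi n (x + 1) w by move=> w; case: (phi01 n (x + 1) w).
have := Emono (P := P n) (mphi n (x + 1)) mg f0 pw.
rewrite Eadd; last 4 first.
- exact: mphi.
- by apply: measurable_realfun.measurable_funD; [exact: measurable_cst | exact: measurable_realfun.measurable_indic].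
- by move=> w; case: (phi01 n x w).
- by move=> w /=; have [i0 _] := ind01 A w; lra.
rewrite Eadd; last 4 first.
- exact: measurable_cst.
- exact: measurable_realfun.measurable_indic.
- by move=> w /=; lra.
- by move=> w; case: (ind01 A w).
rewrite expectation_cst expectation_indic //.
have [-> _] := EF n (x + 1); have [-> _] := EF n x.
move=> h; have := cover n (x - N%:R) (N + N).
rewrite -/A => hc.
have hP : P n A = (fine (P n A))%:E by rewrite fineK // fin_num_measure.
rewrite hP in h hc; rewrite -!EFinD lee_fin in h.
rewrite lee_fin in hc; rewrite lee_fin; lra.
Qed.

Lemma S_up n : (S n <= ((1 / c) * fine (D n))%:E)%E.
Proof.
apply/ereal_supP => y [x _ <-].
set A := Aw n x (x + 1).
have mA : measurable A by exact: mAw.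
have pw : forall w, (phi n x \+ (fun w => c * \1_A w)) w <= phi n (x + 1) w.
  move=> w /=.
  have [p0 p1] := phi01 n x w; have [q0 q1] := phi01 n (x + 1) w.
  have hx1 : x <= x + 1 by lra.
  have [_ [hm _]] := H1 n x (x + 1) w hx1.
  have [hA|hA] := boolP (w \in A).
    rewrite indicE hA mulr1; have := H4 n x w; rewrite inE in hA.
    by move=> /(_ hA); lra.
  by rewrite indicE (negbTE hA) mulr0 addr0.
have mg : measurable_fun setT (phi n x \+ (fun w => c * \1_A w)).
  by apply: measurable_realfun.measurable_funD; [exact: mphi | apply: measurable_realfun.measurable_funM; [exact: measurable_cst | exact: measurable_realfun.measurable_indic]].
have f0 : forall w, 0 <= (phi n x \+ (fun w => c * \1_A w)) w.
  by move=> w /=; have [i0 _] := ind01 A w; have [p0 _] := phi01 n x w; have := mulr_ge0 (ltW c0) i0; lra.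
have := Emono (P := P n) mg (mphi n (x + 1)) f0 pw.
rewrite Eadd; last 4 first.
- exact: mphi.
- by apply: measurable_realfun.measurable_funM; [exact: measurable_cst | exact: measurable_realfun.measurable_indic].
- by move=> w; case: (phi01 n x w).
- by move=> w /=; have [i0 _] := ind01 A w; apply: mulr_ge0 => //; exact: ltW.
rewrite EZindic //; last exact: ltW.
have [-> _] := EF n (x + 1); have [-> _] := EF n x.
have hP : P n A = (fine (P n A))%:E by rewrite fineK // fin_num_measure.
rewrite hP -EFinM -EFinD lee_fin => h; rewrite lee_fin.
have hD : F n (x + 1) - F n x <= fine (D n).
  rewrite -lee_fin -DE; apply: ereal_sup_ubound; by exists x.
rewrite mulrC mul1r ler_pdivlMr // mulrC; lra.
Qed.


Lemma cdf_small n e : 0 < e -> exists y, (P n (Bl n y) <= e%:E)%E.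
Proof.
move=> e0.
have := cvg_cdfNy0 (eta n).
move/fine_cvgP => [_ hf].
move/cvgrPdist_lt : hf => /(_ e e0) [M [_ HM]].
exists (M - 1).
have hM : M - 1 < M by lra.
have := HM _ hM; rewrite /= sub0r normrN.
have -> : cdf (eta n) (M - 1) = P n (Bl n (M - 1)).
  rewrite /cdf /distribution /pushforward; congr (P n _).
have hP : P n (Bl n (M - 1)) = (fine (P n (Bl n (M - 1))))%:E.
  by rewrite fineK // fin_num_measure //; exact: mBl.
rewrite hP lee_fin => /(le_lt_trans (ler_norm _)) h; exact: ltW.
Qed.

Definition G n := ereal_sup (range (fun x => (P n [set w | (eta n w <= x)%R] - (F n x)%:E)%E)).

Lemma G_up n eps (N : nat) : 0 < eps ->
  (forall n x w, eta n w <= x - N%:R -> 1 - eps < phi n x w) ->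
  (G n <= (eps + N%:R * fine (S n))%:E)%E.
Proof.
move=> e0 HB; apply/ereal_supP => y [x _ <-].
set A := Aw n (x - N%:R) (x - N%:R + N%:R).
change [set w | (eta n w <= x)%R] with (Bl n x).
have mA : measurable A by exact: mAw.
have mB : measurable (Bl n x) by exact: mBl.
have pw : forall w, \1_(Bl n x) w <= (phi n x \+ (cst eps \+ \1_A)) w :> R.
  move=> w /=.
  have [p0 p1] := phi01 n x w.
  have [i0 i1] := ind01 A w; have [j0 j1] := ind01 (Bl n x) w.
  have [h|h] := leP (eta n w) (x - N%:R).
    by have := HB n x w h; lra.
  have [h'|h'] := leP (eta n w) x.
    have : \1_A w = 1 :> R.
      by rewrite indicE mem_set //; rewrite /A /Aw /= h /= subrK.
    lra.
  have : \1_(Bl n x) w = 0 :> R.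
    rewrite indicE memNset //; rewrite /Bl /=; lra.
  lra.
have mg : measurable_fun setT (phi n x \+ (cst eps \+ \1_A)).
  by apply: measurable_realfun.measurable_funD; [exact: mphi|apply: measurable_realfun.measurable_funD; [exact: measurable_cst | exact: measurable_realfun.measurable_indic]].
have f0 : forall w, 0 <= \1_(Bl n x) w :> R by move=> w; case: (ind01 (Bl n x) w).
have mi : measurable_fun setT (\1_(Bl n x) : T n -> R) by exact: measurable_realfun.measurable_indic.
have := Emono (P := P n) mi mg f0 pw.
rewrite Eadd; last 4 first.
- exact: mphi.
- by apply: measurable_realfun.measurable_funD; [exact: measurable_cst | exact: measurable_realfun.measurable_indic].
- by move=> w; case: (phi01 n x w).
- by move=> w /=; have [i0 _] := ind01 A w; lra.
rewrite Eadd; last 4 first.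
- exact: measurable_cst.
- exact: measurable_realfun.measurable_indic.
- by move=> w /=; lra.
- by move=> w; case: (ind01 A w).
rewrite expectation_cst !expectation_indic //.
have [-> _] := EF n x.
move=> h; have := cover n (x - N%:R) N.
rewrite -/A => hc.
have hP : P n A = (fine (P n A))%:E by rewrite fineK // fin_num_measure.
have hQ : P n (Bl n x) = (fine (P n (Bl n x)))%:E by rewrite fineK // fin_num_measure.
rewrite hP in h hc; rewrite hQ in h *; rewrite -!EFinD lee_fin in h.
rewrite lee_fin in hc; rewrite -EFinB lee_fin; lra.
Qed.

Lemma G_low n e : 0 < e -> ((- e)%:E <= G n)%E.
Proof.
move=> e0.
have e20 : 0 < e / 2 by rewrite divr_gt0.
have [M [M0 HM]] := H2 (e / 2) e20.
have [y hy] := cdf_small n (e / 2) e20.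
set x := y - M.
have mB : measurable (Bl n y) by exact: mBl.
have pw : forall w, phi n x w <= (cst (e / 2) \+ \1_(Bl n y)) w.
  move=> w /=.
  have [p0 p1] := phi01 n x w; have [j0 j1] := ind01 (Bl n y) w.
  have [h|h] := leP (eta n w) y.
    have : \1_(Bl n y) w = 1 :> R by rewrite indicE mem_set.
    lra.
  have : eta n w - x > M by rewrite /x; lra.
  move/HM; lra.
have mg : measurable_fun setT (cst (e / 2) \+ \1_(Bl n y)).
  by apply: measurable_realfun.measurable_funD; [exact: measurable_cst | exact: measurable_realfun.measurable_indic].
have f0 : forall w, 0 <= phi n x w by move=> w; case: (phi01 n x w).
have := Emono (P := P n) (mphi n x) mg f0 pw.
rewrite Eadd; last 4 first.
- exact: measurable_cst.
- exact: measurable_realfun.measurable_indic.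
- by move=> w /=; lra.
- by move=> w; case: (ind01 (Bl n y) w).
rewrite expectation_cst expectation_indic //.
have [-> _] := EF n x => h.
apply: le_trans (_ : (P n [set w | (eta n w <= x)%R] - (F n x)%:E <= G n)%E); last first.
  by apply: ereal_sup_ubound; exists x.
change [set w | (eta n w <= x)%R] with (Bl n x).
have hP : P n (Bl n y) = (fine (P n (Bl n y)))%:E by rewrite fineK // fin_num_measure.
have hQ : P n (Bl n x) = (fine (P n (Bl n x)))%:E.
  by rewrite fineK // fin_num_measure //; exact: mBl.
have q0 : (0 <= P n (Bl n x))%E by exact: measure_ge0.
rewrite hP in h hy; rewrite hQ in q0 *; rewrite -!EFinD lee_fin in h.
rewrite lee_fin in hy; rewrite lee_fin in q0; rewrite -EFinB lee_fin; lra.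
Qed.


Lemma negle0 (e : R) : 0 < e -> ((- e)%:E <= 0)%E.
Proof. by move=> e0; rewrite lee_fin oppr_le0 ltW. Qed.

Lemma main_sec : asymp_equiv_rv_fun P (fun n => eta n)
    (fun n x => fine ('E_(P n)[phi n x])%E).
Proof.
have SD : S @ \oo --> 0%E -> D @ \oo --> 0%E.
  move=> hS; apply: (@cvg_dom R _ (fine \o S)); first exact: fine_cvg.
  move=> e e0; have [N [HA HB]] := bigN e e0.
  exists (N + N)%:R; split => // n; split.
    by exact: le_trans (negle0 e e0) (D01 n).1.
  exact: D_up.
have DS : D @ \oo --> 0%E -> S @ \oo --> 0%E.
  move=> hD; apply: (@cvg_dom R _ (fine \o D)); first exact: fine_cvg.
  move=> e e0; exists (1 / c); split; first by rewrite divr_ge0 // ltW.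
  move=> n; split; first by exact: le_trans (negle0 e e0) (S01 n).1.
  apply: le_trans (S_up n) _; rewrite lee_fin lerDr; exact: ltW.
have SG : S @ \oo --> 0%E -> G @ \oo --> 0%E.
  move=> hS; apply: (@cvg_dom R _ (fine \o S)); first exact: fine_cvg.
  move=> e e0; have [N [HA HB]] := bigN e e0.
  exists N%:R; split => // n; split; first exact: G_low.
  exact: G_up.
split; first split.
- exact: SD.
- exact: DS.
- by move=> hS _; exact: SG.
Qed.

End Main.

Theorem proposition5p3 (R : realType) (d : nat -> measure_display)
  (T : forall n, measurableType (d n)) (P : forall n, probability (T n) R)
  (eta : forall n, {RV (P n) >-> R})
  (phi : forall n, R -> {RV (P n) >-> R}) :
  (forall n (x y : R) (w : T n), x <= y ->
     0 <= phi n x w /\ phi n x w <= phi n y w /\ phi n y w <= 1) ->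
  (forall eps : R, 0 < eps -> exists M : R, 0 < M /\
     forall n (x : R) (w : T n), eta n w - x > M -> phi n x w < eps) ->
  (forall eps : R, 0 < eps -> exists M : R, 0 < M /\
     forall n (x : R) (w : T n), eta n w - x < - M -> phi n x w > 1 - eps) ->
  (exists c : R, 0 < c /\
     forall n (x : R) (w : T n), x < eta n w <= x + 1 ->
       phi n (x + 1) w - phi n x w >= c) ->
  asymp_equiv_rv_fun P (fun n => eta n)
    (fun n x => fine ('E_(P n)[phi n x])%E).
Proof.
move=> H1 H2 H3 [c [c0 H4]].
exact: (@main_sec R d T P eta phi H1 H2 H3 c c0 H4).
Qed.
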